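(* Let $Q$ be a quiver such that every path of $Q$ belongs to $\mathcal{A}$, i.e. for any two vertices there is at most one path from one to the other. Then every two-sided algebra ideal $I$ of the path algebra $\Bbbk Q$ is a linearized semigroup ideal, i.e. $I$ is the linear span of a set $X$ of paths such that $\alpha\omega\beta\in X$ whenever $\omega\in X$, $\alpha,\beta$ are paths and the concatenation $\alpha\omega\beta$ is defined (non-zero).
   Context: $\Bbbk$ is an algebraically closed field. Paths include trivial paths $\varepsilon_x$ at vertices; the product of two paths in $\Bbbk Q$ is their concatenation when defined and $0$ otherwise; paths form a basis of $\Bbbk Q$. $\mathcal{A}$ is the set of paths $\omega$ such that no other path has the same head and the same tail as $\omega$. (Equivalently, in semigroup language: $I=\Bbbk\hat I/\Bbbk\mathbf{0}$ for a semigroup ideal $\hat I$ of the path semigroup with zero $\mathbf{0}$.) *)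

(* Defs.v *)
From HB Require Import structures.
From Stdlib Require Lists.List.
From mathcomp Require Import all_boot all_order all_algebra.
Set Implicit Arguments. Unset Strict Implicit. Unset Printing Implicit Defensive.
Import GRing.Theory.
Local Open Scope ring_scope.

(* A (raw) path is a pair (x, l): a starting vertex x and a list of arrows
   l = [e1; ...; en] (composed left to right: e1 first).  The trivial path
   at x is (x, [::]). *)
Section Quiver.
Variables (V E : Type) (src tgt : E -> V).

Fixpoint is_path_from (x : V) (l : seq E) : Prop :=
  match l with
  | [::] => True
  | e :: l' => src e = x /\ is_path_from (tgt e) l'
  end.

Definition is_path (p : V * seq E) : Prop := is_path_from p.1 p.2.

Fixpoint endpt (x : V) (l : seq E) : V :=
  match l with
  | [::] => x
  | e :: l' => endpt (tgt e) l'
  end.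

Definition path_start (p : V * seq E) : V := p.1.
Definition path_end (p : V * seq E) : V := endpt p.1 p.2.

(* concatenation of p followed by q (only meaningful when path_end p = path_start q) *)
Definition pconcat (p q : V * seq E) : V * seq E := (p.1, p.2 ++ q.2).

Definition all_paths_in_A : Prop :=
  forall p q, is_path p -> is_path q ->
    path_start p = path_start q -> path_end p = path_end q -> p = q.

Variable K : nzRingType.

(* Elements of the path algebra K Q: finitely supported K-valued functions
   on paths (coefficient vectors in the basis of paths). *)
Definition inKQ (f : V * seq E -> K) : Prop :=
  (forall p, f p != 0 -> is_path p) /\
  exists s : seq (V * seq E), forall p, f p != 0 -> Stdlib.Lists.List.In p s.

Definition kq_add (f g : V * seq E -> K) : V * seq E -> K := fun p => f p + g p.
Definition kq_scale (c : K) (f : V * seq E -> K) : V * seq E -> K := fun p => c * f p.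
Definition kq_zero : V * seq E -> K := fun _ => 0.

(* Multiplication in K Q, extending bilinearly the product of paths
   (concatenation when defined, 0 otherwise): the coefficient of a path
   (x, l) in f * g is the sum over all factorisations (x, l) = a b. *)
Definition kq_mul (f g : V * seq E -> K) : V * seq E -> K :=
  fun p => \sum_(i < (size p.2).+1)
             f (p.1, take i p.2) * g (endpt p.1 (take i p.2), drop i p.2).

Definition is_kq_ideal (I : (V * seq E -> K) -> Prop) : Prop :=
  (forall f, I f -> inKQ f) /\
  I kq_zero /\
  (forall f g, I f -> I g -> I (kq_add f g)) /\
  (forall c f, I f -> I (kq_scale c f)) /\
  (forall f g, I f -> inKQ g -> I (kq_mul g f)) /\
  (forall f g, I f -> inKQ g -> I (kq_mul f g)).

Definition linearized_semigroup_ideal (I : (V * seq E -> K) -> Prop) : Prop :=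
  exists X : V * seq E -> Prop,
    (forall w, X w -> is_path w) /\
    (forall w a b, X w -> is_path a -> is_path b ->
        path_end a = path_start w -> path_end w = path_start b ->
        X (pconcat (pconcat a w) b)) /\
    (forall f, I f <-> (inKQ f /\ forall p, f p != 0 -> X p)).

End Quiver.

(* Main.v *)
Require Import Defs.
From mathcomp Require Import all_boot all_order all_algebra.
From mathcomp Require Import zify.
From Stdlib Require Import ClassicalEpsilon FunctionalExtensionality.
Set Implicit Arguments. Unset Strict Implicit. Unset Printing Implicit Defensive.
Import GRing.Theory.
Local Open Scope ring_scope.

Section Aux.
Variables (k : fieldType) (V E : Type) (src tgt : E -> V).

Definition dlt (p : V * seq E) : V * seq E -> k :=
  fun q => if excluded_middle_informative (q = p) then 1 else 0.

Lemma dlt_eq p : dlt p p = 1.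
Proof. by rewrite /dlt; case: excluded_middle_informative. Qed.

Lemma dlt_neq p q : q <> p -> dlt p q = 0.
Proof. by rewrite /dlt; case: excluded_middle_informative. Qed.

Lemma endpt_cat x l1 l2 : endpt tgt x (l1 ++ l2) = endpt tgt (endpt tgt x l1) l2.
Proof. by elim: l1 x => //= e l IH x. Qed.

Lemma path_cat x l1 l2 : is_path_from src tgt x l1 ->
  is_path_from src tgt (endpt tgt x l1) l2 -> is_path_from src tgt x (l1 ++ l2).
Proof. by elim: l1 x => //= e l IH x [H1 H2] H3; split => //; apply: IH. Qed.

Lemma dlt_KQ p : is_path src tgt p -> inKQ src tgt (dlt p).
Proof.
move=> Hp; split.
  move=> q; case: (excluded_middle_informative (q = p)) => [->//|ne].
  by rewrite dlt_neq // eqxx.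
exists [:: p] => q; case: (excluded_middle_informative (q = p)) => [->|ne].
  by left.
by rewrite dlt_neq // eqxx.
Qed.

Lemma mul_e_left x (h : V * seq E -> k) q :
  kq_mul tgt (dlt (x, [::])) h q =
  if excluded_middle_informative (q.1 = x) then h q else 0.
Proof.
case: q => y l; rewrite /kq_mul /= big_ord_recl /= take0 drop0.
rewrite big1 => [|i _].
  rewrite addr0; case: excluded_middle_informative => /= [->|ne].
    by rewrite dlt_eq mul1r.
  by rewrite dlt_neq ?mul0r //; case.
rewrite dlt_neq ?mul0r //; case=> _ H.
have Hi := ltn_ord i.
have := congr1 size H; rewrite size_takel /=; first by [].
by rewrite /bump /=; lia.
Qed.

Lemma mul_e_right y (h : V * seq E -> k) q :
  kq_mul tgt h (dlt (y, [::])) q =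
  if excluded_middle_informative (endpt tgt q.1 q.2 = y) then h q else 0.
Proof.
case: q => x l; rewrite /kq_mul /= big_ord_recr /= take_size drop_size.
rewrite big1 => [|i _].
  rewrite add0r; case: excluded_middle_informative => /= [->|ne].
    by rewrite dlt_eq mulr1.
  by rewrite dlt_neq ?mulr0 //; case.
rewrite dlt_neq ?mulr0 //; case=> _ H.
have Hi := ltn_ord i.
have := congr1 size H; rewrite size_drop /=; lia.
Qed.

Lemma mul_left a (h : V * seq E -> k) r :
  kq_mul tgt (dlt a) h (a.1, a.2 ++ r) = h (endpt tgt a.1 a.2, r).
Proof.
rewrite /kq_mul /=.
have Hi : (size a.2 < (size (a.2 ++ r)).+1)%N by rewrite size_cat; lia.
rewrite (bigD1 (Ordinal Hi)) //= take_size_cat // drop_size_cat //.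
rewrite big1 => [|i Hne].
  by rewrite addr0 -surjective_pairing dlt_eq mul1r.
rewrite dlt_neq ?mul0r // => H0; have H := congr1 snd H0; move: H => /= H.
have Hi' := ltn_ord i.
move: Hne; have := congr1 size H; rewrite size_takel; last by lia.
by move=> Hs /eqP []; apply: val_inj.
Qed.

Lemma mul_right b (h : V * seq E -> k) x l :
  endpt tgt x l = b.1 ->
  kq_mul tgt h (dlt b) (x, l ++ b.2) = h (x, l).
Proof.
move=> He; rewrite /kq_mul /=.
have Hi : (size l < (size (l ++ b.2)).+1)%N by rewrite size_cat; lia.
rewrite (bigD1 (Ordinal Hi)) //= take_size_cat // drop_size_cat // He.
rewrite big1 => [|i Hne].
  by rewrite addr0 -surjective_pairing dlt_eq mulr1.
rewrite dlt_neq ?mulr0 // => H0; have H := congr1 snd H0; move: H => /= H.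
have Hi' := ltn_ord i.
move: Hne; have := congr1 size H; rewrite size_drop.
move=> Hs /eqP []; apply: val_inj => /=; have Hsz := size_cat l b.2; lia.
Qed.

End Aux.

Theorem proposition2 (k : closedFieldType) (V E : Type) (src tgt : E -> V) :
  all_paths_in_A src tgt ->
  forall I : (V * seq E -> k) -> Prop,
    is_kq_ideal src tgt I -> linearized_semigroup_ideal src tgt I.
Proof.
move=> HA I [HKQ [H0 [Hadd [Hsc [Hl Hr]]]]].
have Hsupp : forall f p, I f -> f p != 0 -> I (dlt k p).
  move=> f p If Hfp.
  have Pp : is_path src tgt p by apply: (HKQ f If).1.
  pose g := kq_mul tgt (kq_mul tgt (dlt k (p.1, [::])) f)
                       (dlt k (path_end tgt p, [::])).
  have Ig : I g.
    apply: Hr; first by apply: Hl => //; apply: dlt_KQ.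
    by apply: dlt_KQ.
  have -> : dlt k p = kq_scale (f p)^-1 g.
    apply: functional_extensionality => q.
    rewrite /kq_scale /g mul_e_right mul_e_left.
    case: (excluded_middle_informative (q = p)) => [->|ne].
      rewrite dlt_eq.
      destruct (excluded_middle_informative (endpt tgt p.1 p.2 = path_end tgt p)) as [e_|nn]; last by case: nn.
      destruct (excluded_middle_informative (p.1 = p.1)) as [e2|nn]; last by case: nn.
      by rewrite /= mulVf.
    rewrite dlt_neq //.
    destruct excluded_middle_informative as [H1|]; last by rewrite mulr0.
    destruct excluded_middle_informative as [H2|]; last by rewrite mulr0.
    case: (eqVneq (f q) 0) => [->|Hq]; first by rewrite mulr0.
    have Pq : is_path src tgt q by apply: (HKQ f If).1.
    by case: ne; apply: HA.
  by apply: Hsc.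
exists (fun w => is_path src tgt w /\ I (dlt k w)).
split; first by move=> w [].
split.
  move=> w a b [Pw Iw] Pa Pb Ha Hb.
  have Pawb : is_path src tgt (pconcat (pconcat a w) b).
    rewrite /is_path /pconcat /=; apply: path_cat.
      apply: path_cat => //; rewrite /path_end in Ha; rewrite Ha; exact: Pw.
    rewrite endpt_cat.
    rewrite /path_end in Ha Hb; rewrite Ha Hb; exact: Pb.
  split => //.
  pose g := kq_mul tgt (kq_mul tgt (dlt k a) (dlt k w)) (dlt k b).
  have Ig : I g.
    apply: Hr; last by apply: dlt_KQ.
    by apply: Hl => //; apply: dlt_KQ.
  apply: (Hsupp g) => //.
  rewrite /g /pconcat /=.
  rewrite mul_right; last first.
    rewrite endpt_cat; rewrite /path_end in Ha Hb; by rewrite Ha Hb.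
  rewrite mul_left.
  rewrite /path_end in Ha; rewrite Ha -surjective_pairing dlt_eq.
  exact: oner_neq0.
move=> f; split.
  move=> If; split; first exact: HKQ.
  move=> p Hp; split; first by apply: (HKQ f If).1.
  exact: (Hsupp f).
move=> [[_ [s Hs]] HX].
elim: s f Hs HX => [|p s IH] f Hs HX.
  have -> : f = kq_zero k.
    apply: functional_extensionality => q; rewrite /kq_zero.
    by case: (eqVneq (f q) 0) => // /Hs.
  exact: H0.
pose f' := fun q => if excluded_middle_informative (q = p) then 0 else f q.
have Hf'1 : forall q, f' q != 0 -> Stdlib.Lists.List.In q s.
  move=> q; rewrite /f'; destruct excluded_middle_informative as [eq_|ne]; first by rewrite eqxx.
  by move=> /Hs [E'|//]; case: ne.
have Hf'2 : forall q, f' q != 0 -> is_path src tgt q /\ I (dlt k q).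
  move=> q; rewrite /f'; destruct excluded_middle_informative as [eq_|ne]; first by rewrite eqxx.
  by move=> /HX.
have If' := IH f' Hf'1 Hf'2.
case: (eqVneq (f p) 0) => Hp.
  have -> : f = f'.
    apply: functional_extensionality => q; rewrite /f'.
    by destruct excluded_middle_informative as [eq_|] => //=; rewrite eq_.
  exact: If'.
have -> : f = kq_add (kq_scale (f p) (dlt k p)) f'.
  apply: functional_extensionality => q; rewrite /kq_add /kq_scale /f'.
  destruct (excluded_middle_informative (q = p)) as [eq_|ne] => /=.
    by rewrite eq_ dlt_eq mulr1 addr0.
  by rewrite dlt_neq // mulr0 add0r.
apply: Hadd => //; apply: Hsc; exact: (HX p Hp).2.
Qed.
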